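(* Let $(X,\Sigma)$ be a measurable space and $\mathscr{A}=\{\mathsf{A}(\cdot|E)\colon E\in\Sigma\}$ a family of conditional aggregation operators (with paving $\Sigma$). Consider the property (P): $\boldsymbol{\mu}_{\mathscr{A}}(f,t)=\mu_t(\{x\in X\colon f(x)\ge t\})$ for every $t>0$, every $f\in\mathbf{F}\setminus\{0_X\}$ and every family $\boldsymbol{\mu}=(\mu_t)_{t\ge0}$ of monotone measures on $\Sigma$. (a) If $\Sigma=\{\emptyset,X\}$, then (P) holds if and only if $\mathsf{A}(\cdot|X)$ is idempotent, i.e. $\mathsf{A}(b\mathbf{1}_X|X)=b$ for all $b\in(0,\infty)$. (b) If $\Sigma\ne\{\emptyset,X\}$, then (P) holds if and only if $\mathsf{A}(f|E)=\inf_{x\in E}f(x)$ for all $f\in\mathbf{F}$ and all $E\in\Sigma\setminus\{\emptyset\}$.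
   Context: $0_X$ is the zero function on $X$. $\Sigma^0=\Sigma\setminus\{\emptyset\}$. $\mathbf{F}$ denotes the set of all $\Sigma$-measurable, nonnegative, bounded functions $f\colon X\to[0,\infty)$. A monotone measure is a map $\mu\colon\Sigma\to[0,\infty]$ with $\mu(B)\le\mu(C)$ whenever $B\subseteq C$, $\mu(\emptyset)=0$ and $\mu(X)>0$. For $E\in\Sigma^0$, a conditional aggregation operator (CAO) w.r.t. $E$ is a map $\mathsf{A}(\cdot|E)\colon\mathbf{F}\to[0,\infty]$ such that (C1) $\mathsf{A}(f|E)\le\mathsf{A}(g|E)$ whenever $f(x)\le g(x)$ for all $x\in E$, and (C2) $\mathsf{A}(\mathbf{1}_{X\setminus E}|E)=0$. Here $\mathsf{A}(\cdot|E)$ is a CAO w.r.t. $E$ for each $E\in\Sigma^0$ and $\mathsf{A}(\cdot|\emptyset)=\infty$. The generalized level measure is $\boldsymbol{\mu}_{\mathscr{A}}(f,t)=\sup\{\mu_t(E)\colon \mathsf{A}(f|E)\ge t,\ E\in\Sigma\}$ for $t\ge0$. *)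

(* Defs.v *)
From HB Require Import structures.
From mathcomp Require Import all_boot all_order all_algebra.
From mathcomp Require Import all_classical all_reals all_analysis.
Set Implicit Arguments. Unset Strict Implicit. Unset Printing Implicit Defensive.
Import Order.TTheory GRing.Theory Num.Theory.
Local Open Scope classical_set_scope.
Local Open Scope ring_scope.

Section Defs.
Context {R : realType} {d : measure_display} {X : measurableType d}.

Definition inF (f : X -> R) : Prop :=
  [/\ measurable_fun setT f, (forall x, 0 <= f x) & exists M : R, forall x, f x <= M].

Definition monotone_measure (mu : set X -> \bar R) : Prop :=
  [/\ (forall B C, measurable B -> measurable C -> B `<=` C -> (mu B <= mu C)%E),
      mu set0 = 0%E & (0 < mu setT)%E].

Definition CAO_family (A : (X -> R) -> set X -> \bar R) : Prop :=
  [/\ forall E, measurable E -> E !=set0 ->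
        [/\ (forall f, inF f -> (0 <= A f E)%E),
            (forall f g, inF f -> inF g -> (forall x, E x -> f x <= g x) ->
                (A f E <= A g E)%E)
          & A (\1_(~` E)) E = 0%E]
    & forall f, inF f -> A f set0 = +oo%E].

Definition gen_level_measure (A : (X -> R) -> set X -> \bar R)
  (mu : R -> set X -> \bar R) (f : X -> R) (t : R) : \bar R :=
  ereal_sup [set mu t E | E in [set E | measurable E /\ (t%:E <= A f E)%E]].

Definition propP (A : (X -> R) -> set X -> \bar R) : Prop :=
  forall (mu : R -> set X -> \bar R), (forall t, 0 <= t -> monotone_measure (mu t)) ->
  forall f, inF f -> f <> (fun _ => 0) ->
  forall t, 0 < t -> gen_level_measure A mu f t = mu t [set x | t <= f x].

End Defs.

(* Main.v *)
Require Import Defs.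
From HB Require Import structures.
From mathcomp Require Import all_boot all_order all_algebra.
From mathcomp Require Import all_classical all_reals all_analysis.
Import Order.TTheory GRing.Theory Num.Theory.
Local Open Scope classical_set_scope.
Local Open Scope ring_scope.

Section Proofs.
Context {R : realType} {d : measure_display} {X : measurableType d}.
Variable A : (X -> R) -> set X -> \bar R.
Hypothesis HA : CAO_family A.

Definition muC (C : set X) : R -> set X -> \bar R :=
  fun _ D => if `[< C `<=` D >] then 1%E else 0%E.

Lemma mono_muC C : C !=set0 -> forall t, monotone_measure (muC C t).
Proof.
move=> [c Cc] t; split.
- move=> B D _ _ BD; rewrite /muC.
  case: (asboolP (C `<=` B)) => h1; case: (asboolP (C `<=` D)) => h2 //.
  + by exfalso; apply: h2; exact: (subset_trans h1 BD).
- rewrite /muC; case: asboolP => // h; by have := h c Cc.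
- rewrite /muC; case: asboolP => [_|h]; first by rewrite lte_fin ltr01.
  by exfalso; apply: h; exact: subsetT.
Qed.

Lemma meas_ge (f : X -> R) t : inF f -> measurable [set x | t <= f x].
Proof.
move=> [mf _ _]; have := mf measurableT _ (measurable_itv `[t, +oo[).
by rewrite setTI set_itvcy.
Qed.

Lemma indicF (E : set X) : measurable E -> inF (\1_E : X -> R).
Proof.
move=> mE; split.
- exact: measurable_realfun.measurable_indic.
- by move=> x; rewrite indicE.
- exists 1 => x; rewrite indicE; case: (x \in E) => //=.
Qed.

Lemma cstF (b : R) : 0 <= b -> inF (cst b : X -> R).
Proof. move=> b0; split => //. by exists b. Qed.

Lemma A0 E : measurable E -> E !=set0 -> A (cst 0) E = 0%E.
Proof.
move=> mE E0; case: HA => /(_ E mE E0) [Hn Hm Hi] _.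
apply/le_anti/andP; split; last by apply: Hn; apply: cstF.
rewrite -Hi; apply: Hm; first exact: cstF.
- exact/indicF/measurableC.
- by move=> x _; rewrite indicE.
Qed.

Lemma le_pos (x y : \bar R) : (0 <= y)%E ->
  (forall t : R, 0 < t -> (t%:E <= x)%E -> (t%:E <= y)%E) -> (x <= y)%E.
Proof.
move=> y0 H; case: x H => [s| |] H.
- have [s0|s0] := leP s 0; first exact: le_trans _ y0.
  exact: H.
- case: y y0 H => [r| |] y0 H //. 
  have r0 : 0 <= r by rewrite -lee_fin.
  have := H (r + 1) (ltr_wpDl r0 ltr01) (leey _).
  by rewrite lee_fin gerDl ler10.
- by rewrite leNye.
Qed.

Lemma UB (P : propP A) h C t : inF h -> h <> (fun _ => 0) -> measurable C ->
  C !=set0 -> 0 < t -> (t%:E <= A h C)%E -> forall x, C x -> t <= h x.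
Proof.
move=> Hh hne mC C0 t0 HC.
have := P (muC C) (fun t _ => @mono_muC C C0 t) h Hh hne t t0.
rewrite /gen_level_measure => E.
have : (1 <= muC C t [set x | (t <= h x)%R])%E.
  rewrite -E; apply: ereal_sup_ubound; exists C => //.
  by rewrite /muC asboolT.
rewrite /muC; case: asboolP => [sub _|_]; first exact: sub.
by rewrite lee_fin ler10.
Qed.

Lemma LB (P : propP A) f E t : inF f -> measurable E -> E !=set0 -> 0 < t ->
  (forall x, E x -> t <= f x) -> (t%:E <= A f E)%E.
Proof.
move=> Hf mE E0 t0 Ht.
have [mf fge0 [M fM]] := Hf.
pose g := f \* (\1_E : X -> R).
have gE : forall x, E x -> g x = f x by move=> x Ex; rewrite /g /= indicE mem_set // mulr1.
have gnE : forall x, ~ E x -> g x = 0 by move=> x Ex; rewrite /g /= indicE memNset // mulr0.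
have gF : inF g.
  split.
  - rewrite /g; apply: measurable_realfun.measurable_funM => //; exact: measurable_realfun.measurable_indic.
  - by move=> x; rewrite /g /= mulr_ge0 // indicE.
  - exists M => x; rewrite /g /= indicE; case: (x \in E) => /=.
    + by rewrite mulr1.
    + by rewrite mulr0; exact: le_trans (fge0 x) (fM x).
have gne : g <> (fun _ => 0).
  case: E0 => e Ee /(congr1 (fun h => h e)); rewrite gE // => fe0.
  by have := Ht e Ee; rewrite fe0 => /(lt_le_trans t0); rewrite ltxx.
have := P (muC E) (fun t _ => @mono_muC E E0 t) g gF gne t t0.
have -> : muC E t [set x | t <= g x] = 1%E.
  by rewrite /muC asboolT // => x Ex /=; rewrite gE //; exact: Ht.
rewrite /gen_level_measure => Hsup.
have [D [[mD HD] ED]] : exists D, (measurable D /\ (t%:E <= A g D)%E) /\ E `<=` D.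
  apply: contrapT => nex.
  have : (ereal_sup [set muC E t E0 | E0 in [set E1 | measurable E1 /\ (t%:E <= A g E1)%E]] <= 0)%E.
    apply: ge_ereal_sup => _ [D [mD HD] <-]; rewrite /muC; case: asboolP => // sub.
    by exfalso; apply: nex; exists D.
  by rewrite Hsup lee_fin ler10.
have DE : D `<=` E.
  move=> x Dx; apply: contrapT => nEx.
  have D0 : D !=set0 by exists x.
  have := @UB P g D t gF gne mD D0 t0 HD x Dx.
  by rewrite gnE // => /(lt_le_trans t0); rewrite ltxx.
have DeqE : D = E by apply/seteqP; split.
rewrite DeqE in HD.
apply: le_trans HD _.
case: HA => /(_ E mE E0) [_ Hm _] _.
by apply: Hm => // x Ex; rewrite gE.
Qed.

Definition charA := forall f, inF f -> forall E, measurable E -> E !=set0 ->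
  A f E = ereal_inf [set (f x)%:E | x in E].

Lemma key : propP A <-> charA.
Proof.
split.
- move=> P f Hf E mE E0.
  have [mf fge0 _] := Hf.
  case: HA => /(_ E mE E0) [Hn Hm Hi] _.
  apply/le_anti/andP; split.
  + apply: le_pos.
      by apply: le_ereal_inf_tmp => _ [x _ <-]; rewrite lee_fin.
    move=> t t0 HtA; apply: le_ereal_inf_tmp => _ [x Ex <-]; rewrite lee_fin.
    have [f0|fn0] := pselect (f = (fun _ => 0)).
      move: HtA; rewrite f0 (@A0 E mE E0) lee_fin => t00.
      by have := lt_le_trans t0 t00; rewrite ltxx.
    exact: (@UB P f E t Hf fn0 mE E0 t0 HtA x Ex).
  + apply: le_pos; first exact: Hn.
    move=> t t0 Hti; apply: LB => // x Ex.
    rewrite -lee_fin; apply: le_trans Hti _.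
    by apply: ereal_inf_lbound; exists x.
- move=> C mu Hmu f Hf fn0 t t0.
  case: (Hmu t (ltW t0)) => mono _ _.
  case: HA => _ Hempty.
  apply/le_anti/andP; split.
  + apply: ge_ereal_sup => _ [D [mD HD] <-].
    apply: mono => //; first exact: meas_ge.
    move=> x Dx /=.
    have D0 : D !=set0 by exists x.
    rewrite C // in HD.
    have := le_trans HD (ereal_inf_lbound (ex_intro2 _ _ x Dx erefl)).
    by rewrite lee_fin.
  + apply: ereal_sup_ubound; exists [set x | t <= f x] => //.
    split; first exact: meas_ge.
    have [S0|S0] := pselect ([set x | t <= f x] !=set0).
      rewrite (C f Hf _ (@meas_ge f t Hf) S0).
      by apply: le_ereal_inf_tmp => _ [x Sx <-]; rewrite lee_fin.
    have -> : [set x | t <= f x] = set0.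
      by apply/seteqP; split => x //= Sx; apply: S0; exists x.
    by rewrite Hempty // leey.
Qed.

Lemma inf_cst (x0 : X) (c : R) : ereal_inf [set ((cst c : X -> R) x)%:E | x in setT] = c%:E.
Proof.
apply/le_anti/andP; split.
- by apply: ereal_inf_lbound; exists x0.
- by apply: le_ereal_inf_tmp => _ [x _ <-].
Qed.

End Proofs.

Theorem theorem3p18 (R : realType) (d : measure_display) (X : measurableType d)
  (x0 : X) (A : (X -> R) -> set X -> \bar R) (HA : CAO_family A) :
  ((forall B : set X, measurable B <-> (B = set0 \/ B = setT)) ->
     (propP A <-> forall b : R, 0 < b -> A (fun _ => b) setT = b%:E)) /\
  (~ (forall B : set X, measurable B <-> (B = set0 \/ B = setT)) ->
     (propP A <-> forall f : X -> R, inF f -> forall E : set X, measurable E -> E !=set0 ->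
        A f E = ereal_inf [set (f x)%:E | x in E])).
Proof.
split; last by move=> _; exact: (@key _ _ _ A HA).
move=> triv; rewrite (@key _ _ _ A HA); split.
- move=> C b b0.
  by rewrite (C _ (@cstF _ _ X b (ltW b0))) //; [exact: inf_cst | exists x0].
- move=> Hid f Hf E mE E0.
  have ET : E = setT.
    case: ((triv E).1 mE) => // E00.
    by exfalso; case: E0 => x; rewrite E00.
  subst E.
  have [mf fge0 _] := Hf.
  have fc : forall x, f x = f x0.
    have := mf measurableT _ (measurable_set1 (f x0)).
    rewrite setTI => /triv [H|H].
      have : (f @^-1` [set f x0]) x0 by [].
      by rewrite H.
    by move=> x; have : (f @^-1` [set f x0]) x by rewrite H.
  move: (f x0) fc (fge0 x0) => c fc c0.
  have -> : f = cst c by apply: funext.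
  rewrite inf_cst //.
  have [c00|c00] := eqVneq c 0.
    by rewrite c00 (@A0 _ _ _ A HA setT measurableT E0).
  by apply: Hid; rewrite lt_def c00 c0.
Qed.
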